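(* Let $G$ be a finite metric graph and let $$\lambda_G := \inf\left\{ \frac{\pi^2}{u_C^2} : C \text{ a cycle in } G \text{ with commensurate edges}\right\}$$ (with $\inf\emptyset=+\infty$). Then $G$ has no resonance in $(-\infty,\lambda_G)$, i.e. $R(G,\lambda)=\{0\}$ for every real $\lambda<\lambda_G$.
   Context: A finite metric graph $G$ has finite vertex set $V$ and finite edge set $E$ (loops and multiple edges allowed) with lengths $L:E\to(0,\infty)$, each edge identified with $[0,L(e)]$. $-\Delta_G$ denotes the Laplacian on $G$ with Kirchhoff vertex conditions: it acts as $-f_e''$ on each edge, with domain consisting of functions that are edgewise $H^2$, continuous at every vertex, and satisfy $\sum_{t(e)=v} f_e'(L(e)) - \sum_{o(e)=v} f_e'(0)=0$ at every vertex $v$ (where $o(e),t(e)$ are the vertices identified with $0$ and $L(e)$). A real number $\lambda$ is a (real) resonance of $G$ if there is a nontrivial $f\in\ker(-\Delta_G-\lambda)$ with $f(v)=0$ for all vertices $v$; $R(G,\lambda)$ denotes the space of such $f$ (together with $0$). A cycle $C$ has commensurate edges if its edge lengths are rational multiples of each other; then $u_C$ denotes the largest number such that every edge length in $C$ is a natural multiple of $u_C$. *)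

(* Defs.v *)
From Stdlib Require Import Reals List Arith ZArith.
Open Scope R_scope.

(** A finite metric graph: vertices are 0..nV-1, edges are 0..nE-1;
    edge e goes from vertex [src e] (identified with 0) to vertex [tgt e]
    (identified with [len e]).  Loops and multiple edges are allowed. *)
Record mgraph := MGraph {
  nV : nat;
  nE : nat;
  src : nat -> nat;
  tgt : nat -> nat;
  len : nat -> R
}.

Definition wf_graph (G : mgraph) : Prop :=
  forall e, (e < nE G)%nat ->
    (src G e < nV G)%nat /\ (tgt G e < nV G)%nat /\ 0 < len G e.

Fixpoint sum_upto (n : nat) (g : nat -> R) : R :=
  match n with
  | O => 0
  | S m => sum_upto m g + g m
  end.

Definition cont_within (h : R -> R) (l x : R) : Prop :=
  limit1_in h (fun y => 0 <= y <= l) (h x) x.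

Definition edge_eigen (lam l : R) (fe dfe : R -> R) : Prop :=
  (forall x, 0 < x < l ->
     derivable_pt_lim fe x (dfe x) /\ derivable_pt_lim dfe x (- lam * fe x)) /\
  (forall x, 0 <= x <= l -> cont_within fe l x /\ cont_within dfe l x).

(** [f] (edgewise functions, edgewise derivatives [df]) lies in
    ker(-Delta_G - lam) with Kirchhoff conditions; [F] gives the vertex values. *)
Definition in_kernel (G : mgraph) (lam : R) (f df : nat -> R -> R)
    (F : nat -> R) : Prop :=
  (forall e, (e < nE G)%nat -> edge_eigen lam (len G e) (f e) (df e)) /\
  (forall e, (e < nE G)%nat ->
     f e 0 = F (src G e) /\ f e (len G e) = F (tgt G e)) /\
  (forall v, (v < nV G)%nat ->
     sum_upto (nE G) (fun e => if Nat.eqb (tgt G e) v then df e (len G e) else 0)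
     - sum_upto (nE G) (fun e => if Nat.eqb (src G e) v then df e 0 else 0) = 0).

Definition in_resonance_space (G : mgraph) (lam : R) (f df : nat -> R -> R) : Prop :=
  exists F : nat -> R, in_kernel G lam f df F /\ (forall v, (v < nV G)%nat -> F v = 0).

Definition is_cycle (G : mgraph) (es vs : list nat) : Prop :=
  (1 <= length es)%nat /\ length vs = length es /\
  NoDup es /\ NoDup vs /\
  (forall e, In e es -> (e < nE G)%nat) /\
  (forall i, (i < length es)%nat ->
     let e := nth i es 0%nat in
     let a := nth i vs 0%nat in
     let b := nth ((i + 1) mod length es) vs 0%nat in
     (src G e = a /\ tgt G e = b) \/ (src G e = b /\ tgt G e = a)).

Definition commensurate (G : mgraph) (es : list nat) : Prop :=
  forall e e', In e es -> In e' es ->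
    exists p q : Z, q <> 0%Z /\ IZR q * len G e = IZR p * len G e'.

Definition common_unit (G : mgraph) (es : list nat) (u : R) : Prop :=
  0 < u /\ forall e, In e es -> exists n : nat, len G e = INR n * u.

Definition is_uC (G : mgraph) (es : list nat) (u : R) : Prop :=
  common_unit G es u /\ forall u', common_unit G es u' -> u' <= u.

(* Main.v *)
Require Import Defs.
From Stdlib Require Import Reals List Arith ZArith Lra Lia Classical.
Open Scope R_scope.

Lemma lim_get (h : R -> R) L p : cont_within h L p -> forall eps, eps > 0 ->
  exists d, d > 0 /\ forall y, 0 <= y <= L -> Rabs (y - p) < d -> Rabs (h y - h p) < eps.
Proof.
  intros H eps He; destruct (H eps He) as [d [Hd Hx]]; exists d; split; auto.
  intros y Hy Hyd; apply (Hx y); split; auto.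
Qed.

Lemma pick_near L p d : 0 < L -> 0 <= p <= L -> d > 0 ->
  exists y, 0 < y < L /\ Rabs (y - p) < d.
Proof.
  intros HL Hp Hd.
  assert (Hm1 : Rmin d (L/2) <= d) by apply Rmin_l.
  assert (Hm2 : Rmin d (L/2) <= L/2) by apply Rmin_r.
  assert (Hm3 : 0 < Rmin d (L/2)) by (apply Rmin_glb_lt; lra).
  destruct (Rle_dec p (L/2)).
  - exists (p + Rmin d (L/2) / 2); split; [lra|].
    rewrite Rabs_pos_eq; lra.
  - exists (p - Rmin d (L/2) / 2); split; [lra|].
    rewrite Rabs_left; lra.
Qed.

Lemma eq_endpoint h k L p : 0 < L -> 0 <= p <= L -> cont_within h L p -> cont_within k L p ->
  (forall x, 0 < x < L -> h x = k x) -> h p = k p.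
Proof.
  intros HL Hp Hh Hk E.
  destruct (Req_dec (h p) (k p)) as [|Hne]; auto; exfalso.
  set (d := Rabs (h p - k p)).
  assert (Hd : d > 0) by (apply Rabs_pos_lt; lra).
  destruct (lim_get h L p Hh (d/2)) as [d1 [Hd1 H1]]; [lra|].
  destruct (lim_get k L p Hk (d/2)) as [d2 [Hd2 H2]]; [lra|].
  destruct (pick_near L p (Rmin d1 d2) HL Hp) as [y [Hy Hyp]].
  { apply Rmin_glb_lt; lra. }
  assert (Hr1 := Rmin_l d1 d2). assert (Hr2 := Rmin_r d1 d2).
  specialize (H1 y ltac:(lra) ltac:(lra)). specialize (H2 y ltac:(lra) ltac:(lra)).
  rewrite E in H1 by lra.
  apply Rabs_def2 in H1; apply Rabs_def2 in H2.
  unfold d in *. destruct (Rcase_abs (h p - k p)).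
  - rewrite Rabs_left in * by lra; lra.
  - rewrite Rabs_pos_eq in * by lra; lra.
Qed.

Lemma cont_of_cpt k L p : continuity_pt k p -> cont_within k L p.
Proof.
  intros H eps He; destruct (H eps He) as [d [Hd Hx]]; exists d; split; auto.
  intros x [Dx Hdx]. destruct (Req_dec p x).
  - subst; simpl; unfold Rdist; rewrite Rminus_diag, Rabs_R0; auto.
  - apply Hx; split; [split; [exact I| auto]|auto].
Qed.

Lemma cont_const c L p : cont_within (fun _ => c) L p.
Proof.
  intros eps He; exists 1; split; [lra|]. intros x _; simpl; unfold Rdist.
  rewrite Rminus_diag, Rabs_R0; auto.
Qed.

Lemma const_inner h L : (forall x, 0 < x < L -> derivable_pt_lim h x 0) ->
  forall a b, 0 < a < L -> 0 < b < L -> h a = h b.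
Proof.
  intros H.
  assert (K : forall a b, 0 < a -> a < b -> b < L -> h a = h b).
  { intros a b Ha Hab Hb.
    destruct (MVT_cor2 h (fun _ => 0) a b Hab) as [c [Hc _]].
    - intros c Hc; apply H; lra.
    - lra. }
  intros a b Ha Hb. destruct (Rtotal_order a b) as [|[|]].
  - apply K; lra.
  - subst; auto.
  - symmetry; apply K; lra.
Qed.

Lemma mono_inner h h' L : (forall x, 0 < x < L -> derivable_pt_lim h x (h' x) /\ 0 <= h' x) ->
  forall a b, 0 < a -> a <= b -> b < L -> h a <= h b.
Proof.
  intros H a b Ha Hab Hb. destruct (Req_dec a b). subst; lra.
  destruct (MVT_cor2 h h' a b) as [c [Hc Hc2]]; [lra| |].
  - intros c Hc; apply H; lra.
  - assert (0 <= h' c) by (apply H; lra). nra.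
Qed.

Lemma mono h h' L : 0 < L -> cont_within h L 0 -> cont_within h L L ->
  (forall x, 0 < x < L -> derivable_pt_lim h x (h' x) /\ 0 <= h' x) ->
  forall x, 0 < x < L -> h 0 <= h x /\ h x <= h L.
Proof.
  intros HL H0 HLL H x Hx. split.
  - destruct (Rle_dec (h 0) (h x)) as [|Hn]; auto. exfalso.
    destruct (lim_get h L 0 H0 (h 0 - h x)) as [d [Hd Hy]]; [lra|].
    assert (Hm1 := Rmin_l d x). assert (Hm2 := Rmin_r d x).
    assert (Hm3 : 0 < Rmin d x) by (apply Rmin_glb_lt; lra).
    specialize (Hy (Rmin d x / 2) ltac:(lra)).
    rewrite Rminus_0_r, Rabs_pos_eq in Hy by lra.
    specialize (Hy ltac:(lra)). apply Rabs_def2 in Hy.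
    assert (h (Rmin d x / 2) <= h x) by (apply (mono_inner h h' L); auto; lra).
    lra.
  - destruct (Rle_dec (h x) (h L)) as [|Hn]; auto. exfalso.
    destruct (lim_get h L L HLL (h x - h L)) as [d [Hd Hy]]; [lra|].
    assert (Hm1 := Rmin_l d (L - x)). assert (Hm2 := Rmin_r d (L - x)).
    assert (Hm3 : 0 < Rmin d (L - x)) by (apply Rmin_glb_lt; lra).
    specialize (Hy (L - Rmin d (L - x) / 2) ltac:(lra)).
    rewrite Rabs_left in Hy by lra.
    specialize (Hy ltac:(lra)). apply Rabs_def2 in Hy.
    assert (h x <= h (L - Rmin d (L - x) / 2)) by (apply (mono_inner h h' L); auto; lra).
    lra.
Qed.

Lemma dpl_eq f x l l' : derivable_pt_lim f x l -> l = l' -> derivable_pt_lim f x l'.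
Proof. intros H ->; exact H. Qed.

Lemma dpl_lin s x : derivable_pt_lim (fun t => s * t) x s.
Proof.
  apply (dpl_eq _ _ (s * 1)); [|ring].
  apply (derivable_pt_lim_scal id s x 1), derivable_pt_lim_id.
Qed.

Lemma dpl_cos s x : derivable_pt_lim (fun t => cos (s * t)) x (- s * sin (s * x)).
Proof.
  apply (dpl_eq _ _ (- sin (s * x) * s)); [|ring].
  apply (derivable_pt_lim_comp (fun t => s * t) cos x s), derivable_pt_lim_cos.
  apply dpl_lin.
Qed.

Lemma dpl_sin s x : derivable_pt_lim (fun t => sin (s * t)) x (s * cos (s * x)).
Proof.
  apply (dpl_eq _ _ (cos (s * x) * s)); [|ring].
  apply (derivable_pt_lim_comp (fun t => s * t) sin x s), derivable_pt_lim_sin.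
  apply dpl_lin.
Qed.

Lemma cpt_trig A B s p : continuity_pt (fun x => A * cos (s * x) + B * sin (s * x)) p.
Proof.
  apply derivable_continuous_pt.
  exists (A * (- s * sin (s * p)) + B * (s * cos (s * p))).
  apply (derivable_pt_lim_plus (fun x => A * cos (s * x)) (fun x => B * sin (s * x))).
  - apply (derivable_pt_lim_scal (fun x => cos (s * x))), dpl_cos.
  - apply (derivable_pt_lim_scal (fun x => sin (s * x))), dpl_sin.
Qed.

Lemma edge_nonpos lam L y y' : lam <= 0 -> 0 < L -> edge_eigen lam L y y' ->
  y 0 = 0 -> y L = 0 -> forall x, 0 <= x <= L -> y x = 0.
Proof.
  intros Hl HL [Hd Hc] H0 HL0.
  set (g := fun x => y x * y' x).
  assert (Hgc : forall p, 0 <= p <= L -> cont_within g L p).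
  { intros p Hp. destruct (Hc p Hp) as [C1 C2]. unfold g, cont_within.
    apply limit_mul; auto. }
  assert (Hgd : forall x, 0 < x < L ->
     derivable_pt_lim g x (y' x * y' x + y x * (- lam * y x))).
  { intros x Hx. destruct (Hd x Hx) as [D1 D2].
    apply (derivable_pt_lim_mult y y' x); auto. }
  assert (Hg0 : forall x, 0 < x < L -> g x = 0).
  { intros x Hx.
    destruct (mono g (fun x => y' x * y' x + y x * (- lam * y x)) L HL) with (x := x)
      as [M1 M2]; auto.
    - apply Hgc; lra.
    - apply Hgc; lra.
    - intros z Hz; split; [apply Hgd; auto| nra].
    - unfold g in *. rewrite H0 in M1. rewrite HL0 in M2. lra. }
  assert (Hy'0 : forall x, 0 < x < L -> y' x = 0).
  { intros x Hx.
    assert (Dz : derivable_pt_lim g x 0).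
    { intros eps He.
      assert (Hm : 0 < Rmin x (L - x)) by (apply Rmin_glb_lt; lra).
      exists (mkposreal _ Hm). intros h Hh Hhd. simpl in Hhd.
      assert (Hm1 := Rmin_l x (L - x)). assert (Hm2 := Rmin_r x (L - x)).
      apply Rabs_def2 in Hhd.
      rewrite (Hg0 (x + h)) by lra. rewrite (Hg0 x) by lra.
      replace ((0 - 0) / h - 0) with 0 by (field; auto). rewrite Rabs_R0; auto. }
    assert (E := uniqueness_limite g x _ _ (Hgd x Hx) Dz). nra. }
  assert (Hyc : forall a b, 0 < a < L -> 0 < b < L -> y a = y b).
  { apply const_inner. intros x Hx. rewrite <- (Hy'0 x Hx). apply (Hd x Hx). }
  assert (E0 : y 0 = (fun _ => y (L/2)) 0).
  { apply (eq_endpoint y (fun _ => y (L/2)) L 0); auto; try lra.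
    - apply Hc; lra.
    - apply cont_const.
    - intros x Hx; apply Hyc; lra. }
  simpl in E0.
  intros x Hx. destruct (Req_dec x 0); [subst; auto|].
  destruct (Req_dec x L); [subst; auto|].
  rewrite (Hyc x (L/2)); lra.
Qed.

Lemma edge_pos lam L y y' : 0 < lam -> 0 < L -> edge_eigen lam L y y' ->
  y 0 = 0 -> y L = 0 ->
  (y' 0 = 0 -> y' L = 0 /\ forall x, 0 <= x <= L -> y x = 0) /\
  (y' 0 <> 0 -> y' L <> 0 /\ exists k : nat, (1 <= k)%nat /\ L = INR k * (PI / sqrt lam)).
Proof.
  intros Hl HL [Hd Hc] H0 HL0.
  set (s := sqrt lam).
  assert (Hs : 0 < s) by (apply sqrt_lt_R0; auto).
  assert (Hss : s * s = lam) by (apply sqrt_sqrt; lra).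
  set (A := fun x => y x * cos (s * x) - / s * (y' x * sin (s * x))).
  set (B := fun x => y x * sin (s * x) + / s * (y' x * cos (s * x))).
  assert (HA : forall x, 0 < x < L -> derivable_pt_lim A x 0).
  { intros x Hx. destruct (Hd x Hx) as [D1 D2].
    eapply dpl_eq.
    - apply (derivable_pt_lim_minus (fun x => y x * cos (s * x))
               (fun x => / s * (y' x * sin (s * x)))).
      + apply (derivable_pt_lim_mult y (fun x => cos (s * x))); [exact D1| apply dpl_cos].
      + apply (derivable_pt_lim_scal (fun x => y' x * sin (s * x))).
        apply (derivable_pt_lim_mult y' (fun x => sin (s * x))); [exact D2| apply dpl_sin].
    - rewrite <- Hss. field. lra. }
  assert (HB : forall x, 0 < x < L -> derivable_pt_lim B x 0).
  { intros x Hx. destruct (Hd x Hx) as [D1 D2].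
    eapply dpl_eq.
    - apply (derivable_pt_lim_plus (fun x => y x * sin (s * x))
               (fun x => / s * (y' x * cos (s * x)))).
      + apply (derivable_pt_lim_mult y (fun x => sin (s * x))); [exact D1| apply dpl_sin].
      + apply (derivable_pt_lim_scal (fun x => y' x * cos (s * x))).
        apply (derivable_pt_lim_mult y' (fun x => cos (s * x))); [exact D2| apply dpl_cos].
    - rewrite <- Hss. field. lra. }
  set (A0 := A (L/2)). set (B0 := B (L/2)).
  assert (Hy : forall x, 0 < x < L -> y x = A0 * cos (s * x) + B0 * sin (s * x)).
  { intros x Hx. unfold A0, B0.
    rewrite (const_inner A L HA (L/2) x), (const_inner B L HB (L/2) x) by lra.
    unfold A, B. assert (T := sin2_cos2 (s * x)). unfold Rsqr in T.
    transitivity (y x * (sin (s * x) * sin (s * x) + cos (s * x) * cos (s * x))).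
    - rewrite T; ring.
    - field. lra. }
  assert (Hy' : forall x, 0 < x < L -> y' x = (s * B0) * cos (s * x) + (- s * A0) * sin (s * x)).
  { intros x Hx. unfold A0, B0.
    rewrite (const_inner A L HA (L/2) x), (const_inner B L HB (L/2) x) by lra.
    unfold A, B. assert (T := sin2_cos2 (s * x)). unfold Rsqr in T.
    transitivity (y' x * (sin (s * x) * sin (s * x) + cos (s * x) * cos (s * x))).
    - rewrite T; ring.
    - field. lra. }
  assert (E1 := eq_endpoint y _ L 0 HL ltac:(lra) (proj1 (Hc 0 ltac:(lra)))
                  (cont_of_cpt _ L 0 (cpt_trig A0 B0 s 0)) Hy).
  assert (E2 := eq_endpoint y _ L L HL ltac:(lra) (proj1 (Hc L ltac:(lra)))
                  (cont_of_cpt _ L L (cpt_trig A0 B0 s L)) Hy).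
  assert (E3 := eq_endpoint y' _ L 0 HL ltac:(lra) (proj2 (Hc 0 ltac:(lra)))
                  (cont_of_cpt _ L 0 (cpt_trig (s * B0) (- s * A0) s 0)) Hy').
  assert (E4 := eq_endpoint y' _ L L HL ltac:(lra) (proj2 (Hc L ltac:(lra)))
                  (cont_of_cpt _ L L (cpt_trig (s * B0) (- s * A0) s L)) Hy').
  simpl in E1, E2, E3, E4.
  rewrite Rmult_0_r, cos_0, sin_0 in E1, E3.
  assert (HA0 : A0 = 0) by lra.
  rewrite HA0 in E2, E4, Hy.
  assert (T := sin2_cos2 (s * L)). unfold Rsqr in T.
  split.
  - intros Z. assert (B0 = 0) by (rewrite Z in E3; nra).
    split.
    + rewrite E4, H. ring.
    + intros x Hx. destruct (Req_dec x 0) as [Ex|Ex]; [rewrite Ex; auto|].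
      destruct (Req_dec x L) as [Ex2|Ex2]; [rewrite Ex2; auto|].
      rewrite Hy by lra. rewrite H. ring.
  - intros Z. assert (B0 <> 0) by (intro; apply Z; rewrite E3, H; ring).
    assert (Hsin : sin (s * L) = 0).
    { rewrite HL0 in E2. assert (W : B0 * sin (s * L) = 0) by lra.
      apply Rmult_integral in W; destruct W; lra. }
    split.
    + rewrite E4, Hsin. intro W.
      assert (cos (s * L) * cos (s * L) = 1) by (rewrite Hsin in T; lra).
      assert (s * B0 * cos (s * L) = 0) by lra.
      apply Rmult_integral in H2; destruct H2 as [H2|H2].
      * apply Rmult_integral in H2; destruct H2; lra.
      * rewrite H2 in H1; lra.
    + destruct (sin_eq_0_0 _ Hsin) as [k Hk].
      assert (Hk0 : (0 < k)%Z).
      { apply lt_IZR. assert (0 < s * L) by nra. assert (PI_RGT_0 := PI_RGT_0). nra. }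
      exists (Z.to_nat k). split; [lia|].
      rewrite INR_IZR_INZ, Z2Nat.id by lia.
      fold s. apply (Rmult_eq_reg_l s); [|lra]. rewrite Hk. field. lra.
Qed.

Definition incident (G : mgraph) e v := src G e = v \/ tgt G e = v.
Definition joins (G : mgraph) e a b :=
  (src G e = a /\ tgt G e = b) \/ (src G e = b /\ tgt G e = a).

Lemma sum_zero n g : (forall e, (e < n)%nat -> g e = 0) -> sum_upto n g = 0.
Proof.
  induction n; intros H; simpl; auto.
  rewrite IHn; [rewrite H by lia; ring|]. intros; apply H; lia.
Qed.

Lemma sum_single n g e : (e < n)%nat ->
  (forall e', (e' < n)%nat -> e' <> e -> g e' = 0) -> sum_upto n g = g e.
Proof.
  induction n; intros He H; [lia|]. simpl.
  destruct (Nat.eq_dec e n).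
  - subst. rewrite sum_zero; [ring|]. intros; apply H; lia.
  - rewrite IHn by (try lia; intros; apply H; lia). rewrite (H n) by lia. ring.
Qed.

Lemma degree (G : mgraph) (df : nat -> R -> R)
  (K1 : forall e, (e < nE G)%nat -> df e 0 = 0 -> df e (len G e) = 0)
  (K2 : forall e, (e < nE G)%nat -> df e 0 <> 0 -> df e (len G e) <> 0)
  (Kir : forall v, (v < nV G)%nat ->
     sum_upto (nE G) (fun e => if Nat.eqb (tgt G e) v then df e (len G e) else 0)
     - sum_upto (nE G) (fun e => if Nat.eqb (src G e) v then df e 0 else 0) = 0)
  v e : (v < nV G)%nat -> (e < nE G)%nat -> df e 0 <> 0 -> incident G e v ->
  src G e <> tgt G e ->
  exists e', ((e' < nE G)%nat /\ df e' 0 <> 0) /\ e' <> e /\ incident G e' v.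
Proof.
  intros Hv He Hd Hi Hl. apply NNPP; intro Hn.
  assert (Hz : forall e', (e' < nE G)%nat -> e' <> e -> incident G e' v -> df e' 0 = 0).
  { intros e' H1 H2 H3. destruct (Req_dec (df e' 0) 0); auto.
    exfalso; apply Hn; exists e'; auto. }
  specialize (Kir v Hv).
  rewrite (sum_single _ _ e He) in Kir.
  2:{ intros e' H1 H2. destruct (Nat.eqb_spec (tgt G e') v); auto.
      apply K1; auto. apply Hz; auto. right; auto. }
  rewrite (sum_single _ _ e He) in Kir.
  2:{ intros e' H1 H2. destruct (Nat.eqb_spec (src G e') v); auto.
      apply Hz; auto. left; auto. }
  destruct (Nat.eqb_spec (tgt G e) v); destruct (Nat.eqb_spec (src G e) v).
  - congruence.
  - apply (K2 e He Hd); lra.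
  - apply Hd; lra.
  - destruct Hi; congruence.
Qed.

Definition ppath (G : mgraph) (Sp : nat -> Prop) (vs es : list nat) : Prop :=
  length vs = S (length es) /\ NoDup vs /\ NoDup es /\
  (forall v, In v vs -> (v < nV G)%nat) /\ (forall e, In e es -> Sp e) /\
  (forall j, (j < length es)%nat -> joins G (nth j es 0%nat) (nth j vs 0%nat) (nth (S j) vs 0%nat)) /\
  exists eh, Sp eh /\ incident G eh (nth 0 vs 0%nat).

Lemma in_firstn_l {A} (x : A) n l : In x (firstn n l) -> In x l.
Proof. intros H. rewrite <- (firstn_skipn n l). apply in_or_app; auto. Qed.

Lemma nodup_firstn {A} (l : list A) n : NoDup l -> NoDup (firstn n l).
Proof. intros H. rewrite <- (firstn_skipn n l) in H. eapply NoDup_app_remove_r; eauto. Qed.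

Lemma cycle_of_path G Sp vs es m e' :
  (forall e, Sp e -> (e < nE G)%nat) ->
  ppath G Sp vs es -> (m < length vs)%nat -> Sp e' -> ~ In e' es ->
  joins G e' (nth m vs 0%nat) (nth 0 vs 0%nat) ->
  is_cycle G (firstn m es ++ e' :: nil) (firstn (S m) vs) /\
  (forall e, In e (firstn m es ++ e' :: nil) -> Sp e).
Proof.
  intros HSp [Hl [Nv [Ne [Hv [Hs [Hj _]]]]]] Hm He' Hni Hjn.
  assert (Lf : length (firstn m es ++ e' :: nil) = S m).
  { rewrite length_app, firstn_length_le by lia. simpl; lia. }
  assert (Sall : forall e, In e (firstn m es ++ e' :: nil) -> Sp e).
  { intros e Hin. apply in_app_or in Hin. destruct Hin as [Hin|[Hin|[]]].
    - apply Hs. eapply in_firstn_l; eauto.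
    - subst; auto. }
  split; auto.
  unfold is_cycle. rewrite Lf. split; [lia|]. split.
  { rewrite firstn_length_le by lia. auto. }
  split.
  { apply NoDup_app; [apply nodup_firstn; auto| repeat constructor; auto|].
    intros a Ha [Hb|[]]. subst. apply Hni. eapply in_firstn_l; eauto. }
  split; [apply nodup_firstn; auto|].
  split; [intros; apply HSp, Sall; auto|].
  intros i Hi. cbv zeta.
  destruct (Nat.eq_dec i m).
  - subst i. replace ((m + 1) mod S m)%nat with 0%nat by (replace (m+1)%nat with (S m) by lia; symmetry; apply Nat.Div0.mod_same).
    rewrite app_nth2 by (rewrite firstn_length_le; lia).
    rewrite firstn_length_le by lia. rewrite Nat.sub_diag. cbn [nth].
    rewrite !nth_firstn. replace (m <? S m) with true by (symmetry; apply Nat.ltb_lt; lia).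
    replace (0 <? S m) with true by (symmetry; apply Nat.ltb_lt; lia).
    destruct Hjn; tauto.
  - rewrite Nat.mod_small by lia.
    rewrite app_nth1 by (rewrite firstn_length_le; lia).
    rewrite !nth_firstn.
    replace (i <? m) with true by (symmetry; apply Nat.ltb_lt; lia).
    replace (i <? S m) with true by (symmetry; apply Nat.ltb_lt; lia).
    replace (i + 1 <? S m) with true by (symmetry; apply Nat.ltb_lt; lia).
    replace (i + 1)%nat with (S i) by lia.
    destruct (Hj i ltac:(lia)); tauto.
Qed.

Lemma max_nat (P : nat -> Prop) N : (forall m, P m -> (m <= N)%nat) -> P 0%nat ->
  exists n, P n /\ forall m, P m -> (m <= n)%nat.
Proof.
  revert P. induction N; intros P HB H0.
  - exists 0%nat; split; auto.
  - destruct (classic (P (S N))) as [HS|HS].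
    + exists (S N); split; auto.
    + apply IHN; auto. intros m Hm. specialize (HB m Hm).
      destruct (Nat.eq_dec m (S N)); [subst; contradiction| lia].
Qed.

Lemma nd_neq (vs : list nat) i j : NoDup vs -> (i < length vs)%nat -> (j < length vs)%nat ->
  i <> j -> nth i vs 0%nat <> nth j vs 0%nat.
Proof. intros N Hi Hj Hij E. apply Hij. apply (proj1 (NoDup_nth vs 0%nat) N); auto. Qed.

Lemma find_cycle (G : mgraph) (Sp : nat -> Prop) (HG : wf_graph G)
  (HSp : forall e, Sp e -> (e < nE G)%nat)
  (Hdeg : forall v e, (v < nV G)%nat -> Sp e -> incident G e v -> src G e <> tgt G e ->
      exists e', Sp e' /\ e' <> e /\ incident G e' v)
  e0 (H0 : Sp e0) :
  exists es vs, is_cycle G es vs /\ forall e, In e es -> Sp e.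
Proof.
  set (P := fun n => exists vs es, ppath G Sp vs es /\ length es = n).
  destruct (max_nat P (nV G)) as [n [[vs [es [Hp Hn]]] Hmax]].
  - intros m [vs [es [[Hl [Nv [_ [Hv _]]]] Hm]]].
    assert (length vs <= length (seq 0 (nV G)))%nat.
    { apply NoDup_incl_length; auto. intros x Hx. apply in_seq. specialize (Hv x Hx). lia. }
    rewrite length_seq in H. lia.
  - exists (src G e0 :: nil), nil. split; auto.
    split; [auto|]. split; [repeat constructor; auto|]. split; [constructor|].
    split; [intros v [Hv|[]]; subst; apply (HG e0 (HSp e0 H0))|].
    split; [intros e []|]. split; [intros j Hj; simpl in Hj; lia|].
    exists e0; split; auto. left; auto.
  - destruct Hp as [Hl [Nv [Ne [Hv [Hs [Hj [eh [Heh Hih]]]]]]]].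
    set (v := nth 0 vs 0%nat).
    assert (Hvv : (v < nV G)%nat) by (apply Hv; apply nth_In; lia).
    assert (Hex : exists e', Sp e' /\ incident G e' v /\ ~ In e' es).
    { destruct es as [|e1 es1].
      - exists eh; split; auto.
      - assert (Hne : nth 0 vs 0%nat <> nth 1 vs 0%nat).
        { apply nd_neq; auto; simpl in Hl; lia. }
        destruct (Hj 0%nat ltac:(simpl; lia)) as [J|J]; simpl in J.
        + destruct (Hdeg v e1 Hvv (Hs e1 (or_introl eq_refl)) ltac:(left; tauto) ltac:(intro; apply Hne; lia))
            as [e' [Se' [Ne' Ie']]].
          exists e'; split; auto; split; auto.
          intro Hin. apply (In_nth _ _ 0%nat) in Hin. destruct Hin as [j [Hjl Hje]].
          destruct j as [|j]; [simpl in Hje; congruence|].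
          destruct (Hj (S j) Hjl) as [K|K]; rewrite Hje in K; simpl in Hl;
          destruct Ie' as [I|I]; unfold v in I;
          first [ apply (nd_neq vs 0 (S j)); auto; simpl in Hjl; lia
                | apply (nd_neq vs 0 (S (S j))); auto; simpl in Hjl; lia ].
        + destruct (Hdeg v e1 Hvv (Hs e1 (or_introl eq_refl)) ltac:(right; unfold v; tauto) ltac:(intro; apply Hne; lia))
            as [e' [Se' [Ne' Ie']]].
          exists e'; split; auto; split; auto.
          intro Hin. apply (In_nth _ _ 0%nat) in Hin. destruct Hin as [j [Hjl Hje]].
          destruct j as [|j]; [simpl in Hje; congruence|].
          destruct (Hj (S j) Hjl) as [K|K]; rewrite Hje in K; simpl in Hl;
          destruct Ie' as [I|I]; unfold v in I;
          first [ apply (nd_neq vs 0 (S j)); auto; simpl in Hjl; lia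
                | apply (nd_neq vs 0 (S (S j))); auto; simpl in Hjl; lia ]. }
    destruct Hex as [e' [Se' [Ie' Ni']]].
    set (w := if Nat.eqb (src G e') v then tgt G e' else src G e').
    assert (Jw : joins G e' w v).
    { unfold w, joins. destruct (Nat.eqb_spec (src G e') v).
      - right; auto.
      - left; destruct Ie'; [contradiction| auto]. }
    assert (Hwv : (w < nV G)%nat).
    { destruct (HG e' (HSp e' Se')) as [A [B _]]. unfold w.
      destruct (Nat.eqb (src G e') v); auto. }
    destruct (classic (In w vs)) as [Hin|Hnin].
    + apply (In_nth _ _ 0%nat) in Hin. destruct Hin as [m [Hm Hmw]].
      exists (firstn m es ++ e' :: nil), (firstn (S m) vs).
      apply (cycle_of_path G Sp vs es m e'); auto.
      * repeat split; auto. exists eh; auto.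
      * rewrite Hmw. exact Jw.
    + exfalso.
      assert (HP : P (S n)).
      { exists (w :: vs), (e' :: es). split; [|simpl; lia].
        split; [simpl; lia|]. split; [constructor; auto|]. split; [constructor; auto|].
        split; [intros x [Hx|Hx]; [subst; auto| auto]|].
        split; [intros x [Hx|Hx]; [subst; auto| auto]|].
        split.
        - intros j Hjl. destruct j as [|j]; simpl.
          + exact Jw.
          + apply Hj. simpl in Hjl; lia.
        - exists e'; split; auto. simpl. unfold w, incident.
          destruct (Nat.eqb (src G e') v); auto. }
      specialize (Hmax _ HP). lia.
Qed.

Lemma min_nat (P : nat -> Prop) n : P n -> exists m, P m /\ forall j, P j -> (m <= j)%nat.
Proof.
  induction n as [n IH] using (well_founded_induction lt_wf). intros Hn.
  destruct (classic (exists j, (j < n)%nat /\ P j)) as [[j [Hj Pj]]|Hno].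
  - apply (IH j Hj Pj).
  - exists n; split; auto. intros j Pj. destruct (le_lt_dec n j); auto.
    exfalso; apply Hno; exists j; auto.
Qed.

Lemma div_le L0 m j : 0 < L0 -> (1 <= m)%nat -> (m <= j)%nat -> L0 / INR j <= L0 / INR m.
Proof.
  intros HL Hm Hj. unfold Rdiv. apply Rmult_le_compat_l; [lra|].
  apply Rinv_le_contravar.
  - apply lt_0_INR; lia.
  - apply le_INR; auto.
Qed.

Lemma uc_exists (G : mgraph) es w : wf_graph G -> (forall e, In e es -> (e < nE G)%nat) ->
  es <> nil -> 0 < w ->
  (forall e, In e es -> exists k : nat, (1 <= k)%nat /\ len G e = INR k * w) ->
  commensurate G es /\ exists u, is_uC G es u /\ w <= u.
Proof.
  intros HG Hes Hne Hw Hk. split.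
  - intros e e' He He'. destruct (Hk e He) as [k [Hk1 Ek]]. destruct (Hk e' He') as [k' [Hk1' Ek']].
    exists (Z.of_nat k), (Z.of_nat k'). split; [lia|].
    rewrite <- !INR_IZR_INZ. rewrite Ek, Ek'. ring.
  - destruct es as [|e0 es0]; [congruence|].
    assert (He0 : In e0 (e0 :: es0)) by (left; auto).
    destruct (Hk e0 He0) as [k0 [Hk0 E0]].
    set (L0 := len G e0).
    assert (HL0 : 0 < L0) by (apply (HG e0 (Hes e0 He0))).
    set (Q := fun j => (1 <= j)%nat /\ common_unit G (e0 :: es0) (L0 / INR j)).
    assert (Qk0 : Q k0).
    { split; auto. replace (L0 / INR k0) with w.
      - split; auto. intros e He. destruct (Hk e He) as [k [_ Ek]]. exists k; auto.
      - unfold L0; rewrite E0. field. apply not_0_INR; lia. }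
    destruct (min_nat Q k0 Qk0) as [m [[Hm1 Hm2] Hmin]].
    exists (L0 / INR m). split; [split; auto|].
    + intros u' [Hu' Hc]. destruct (Hc e0 He0) as [j Ej].
      fold L0 in Ej.
      assert (Hj : (1 <= j)%nat).
      { destruct j; [simpl in Ej; lra| lia]. }
      assert (Eu : u' = L0 / INR j) by (rewrite Ej; field; apply not_0_INR; lia).
      assert (Qj : Q j) by (split; auto; rewrite <- Eu; split; auto).
      rewrite Eu. apply div_le; auto.
    + replace w with (L0 / INR k0).
      * apply div_le; auto.
      * unfold L0; rewrite E0. field. apply not_0_INR; lia.
Qed.
Theorem corollary3p3 (G : mgraph) (HG : wf_graph G) (lam : R)
  (Hlam : forall (es vs : list nat) (u : R),
      is_cycle G es vs -> commensurate G es -> is_uC G es u ->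
      lam < PI ^ 2 / u ^ 2)
  (f df : nat -> R -> R) (Hf : in_resonance_space G lam f df) :
  forall e x, (e < nE G)%nat -> 0 <= x <= len G e -> f e x = 0.
Proof.
  destruct Hf as [F [[Hed [Hends Kir]] HF0]].
  assert (Hz : forall e, (e < nE G)%nat -> f e 0 = 0 /\ f e (len G e) = 0).
  { intros e He. destruct (Hends e He) as [A B]. destruct (HG e He) as [C [D _]].
    rewrite A, B, !HF0; auto. }
  destruct (Rle_dec lam 0) as [Hl|Hl].
  - intros e x He Hx. destruct (Hz e He).
    apply (edge_nonpos lam (len G e) (f e) (df e)); auto. apply (HG e He).
  - assert (Hl' : 0 < lam) by lra.
    assert (EP : forall e, (e < nE G)%nat -> _) by
      (intros e He; destruct (Hz e He);
       exact (edge_pos lam (len G e) (f e) (df e) Hl' (proj2 (proj2 (HG e He))) (Hed e He) H H0)).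
    destruct (classic (exists e, (e < nE G)%nat /\ df e 0 <> 0)) as [[e0 [He0 Hd0]]|Hno].
    + exfalso.
      set (Sp := fun e => (e < nE G)%nat /\ df e 0 <> 0).
      assert (Hdeg : forall v e, (v < nV G)%nat -> Sp e -> incident G e v -> src G e <> tgt G e ->
                exists e', Sp e' /\ e' <> e /\ incident G e' v).
      { intros v e Hv [He Hde] Hi Hne.
        apply (degree G df) with (v := v) (e := e); auto.
        - intros e' He' Z. apply (proj1 (proj1 (EP e' He') Z)).
        - intros e' He' Z. apply (proj1 (proj2 (EP e' He') Z)). }
      destruct (find_cycle G Sp HG (fun e H => proj1 H) Hdeg e0 (conj He0 Hd0))
        as [es [vs [Hc Hs]]].
      set (w := PI / sqrt lam).
      assert (Hs0 : 0 < sqrt lam) by (apply sqrt_lt_R0; auto).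
      assert (Hss : sqrt lam * sqrt lam = lam) by (apply sqrt_sqrt; lra).
      assert (Hw : 0 < w) by (unfold w; assert (PI_RGT_0 := PI_RGT_0);
                              apply Rdiv_lt_0_compat; auto).
      destruct (uc_exists G es w HG) as [Hcom [u [Hu Hwu]]]; auto.
      * intros e He; apply (Hs e He).
      * destruct Hc as [H1 _]. intro E; subst; simpl in H1; lia.
      * intros e He. destruct (Hs e He) as [He1 He2].
        apply (proj2 (proj2 (EP e He1) He2)).
      * specialize (Hlam es vs u Hc Hcom Hu).
        assert (PI ^ 2 / u ^ 2 <= PI ^ 2 / w ^ 2).
        { unfold Rdiv. apply Rmult_le_compat_l; [apply pow2_ge_0|].
          apply Rinv_le_contravar; [apply pow_lt; auto| apply pow_incr; lra]. }
        assert (PI ^ 2 / w ^ 2 = lam).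
        { unfold w. rewrite <- Hss at 2. field. split; [lra|].
          assert (PI_RGT_0 := PI_RGT_0); lra. }
        lra.
    + intros e x He Hx.
      assert (Z : df e 0 = 0).
      { destruct (Req_dec (df e 0) 0); auto. exfalso; apply Hno; exists e; auto. }
      apply (proj2 (proj1 (EP e He) Z)); auto.
Qed.
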